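(* Let $Y=\{(x,y)\in\mathbb{R}^2:(x/a)^2+y^2=1\}$ with $1<a\le\sqrt2$, let $X\subseteq Y$ and $0<r<2$. Identify $Y$ with the circle $S^1$ via an orientation-preserving homeomorphism. Orient the edges of the 1-skeleton $\mathrm{VR}_<(X;r)$ by declaring $p\to p'$ iff $p'\in(p,g_r(p))_Y$, and those of $\mathrm{VR}_\le(X;r)$ by declaring $p\to p'$ iff $p'\in(p,g_r(p)]_Y$. Then both resulting directed graphs are cyclic graphs.
   Context: $d$ is the Euclidean metric. $Y$ is oriented clockwise; $(p,q)_Y$, $(p,q]_Y$, $[p,q]_Y$ denote clockwise arcs from $p$ to $q$, and $\prec$ the clockwise cyclic order (points distinct). $h^{-1}(p)$ denotes the point of $Y$ farthest from $p$; for $0<r<2$, $g_r(p)$ is the unique point $q\in[p,h^{-1}(p)]_Y$ with $d(p,q)=r$. $\mathrm{VR}_<(X;r)$ (resp. $\mathrm{VR}_\le(X;r)$) here denotes the graph on $X$ with an edge between points at distance $<r$ (resp. $\le r$). A directed graph with vertex set $V\subseteq S^1$ is cyclic if it has no loops and no opposite edge pairs, and whenever $v\to u$ is an edge, $v\to w$ and $w\to u$ are edges for all $w\in V$ with $v\prec w\prec u\prec v$. *)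

(* Defs.v *)
From Stdlib Require Import Reals Lra ClassicalEpsilon.
Open Scope R_scope.

Definition pt := (R * R)%type.

Definition onY (a : R) (p : pt) : Prop := (fst p / a) ^ 2 + (snd p) ^ 2 = 1.

Definition dist (p q : pt) : R :=
  sqrt ((fst p - fst q) ^ 2 + (snd p - snd q) ^ 2).

(* Clockwise parametrization of Y: increasing t moves clockwise. *)
Definition gam (a t : R) : pt := (a * cos t, - sin t).

(* Clockwise arcs from p to q; x is the tested point.
   (p,q)_Y, (p,q]_Y, [p,q]_Y. *)
Definition arc_oo (a : R) (p q x : pt) : Prop :=
  exists t s u, p = gam a t /\ x = gam a (t + s) /\ q = gam a (t + u) /\
    0 < s /\ s < u /\ u < 2 * PI.
Definition arc_oc (a : R) (p q x : pt) : Prop :=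
  exists t s u, p = gam a t /\ x = gam a (t + s) /\ q = gam a (t + u) /\
    0 < s /\ s <= u /\ u < 2 * PI.
Definition arc_cc (a : R) (p q x : pt) : Prop :=
  exists t s u, p = gam a t /\ x = gam a (t + s) /\ q = gam a (t + u) /\
    0 <= s /\ s <= u /\ u < 2 * PI.

(* Clockwise cyclic order v ≺ w ≺ u ≺ v (points distinct). *)
Definition cyc (a : R) (v w u : pt) : Prop := arc_oo a v u w.

Definition pt_inh : inhabited pt := inhabits (0, 0).

Definition hinv (a : R) (p : pt) : pt :=
  epsilon pt_inh (fun q => onY a q /\ forall q', onY a q' -> dist p q' <= dist p q).

Definition g (a r : R) (p : pt) : pt :=
  epsilon pt_inh (fun q => onY a q /\ arc_cc a p (hinv a p) q /\ dist p q = r).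

Definition VR_lt_dir (a : R) (X : pt -> Prop) (r : R) (p p' : pt) : Prop :=
  X p /\ X p' /\ p <> p' /\ dist p p' < r /\ arc_oo a p (g a r p) p'.
Definition VR_le_dir (a : R) (X : pt -> Prop) (r : R) (p p' : pt) : Prop :=
  X p /\ X p' /\ p <> p' /\ dist p p' <= r /\ arc_oc a p (g a r p) p'.

Definition cyclic_graph (a : R) (V : pt -> Prop) (E : pt -> pt -> Prop) : Prop :=
  (forall v, V v -> ~ E v v) /\
  (forall u v, V u -> V v -> E v u -> ~ E u v) /\
  (forall v u w, V v -> V u -> V w -> E v u -> cyc a v w u -> E v w /\ E w u).

(* Main.v *)
Require Import Defs.
From Stdlib Require Import Reals Lra ClassicalEpsilon Classical.
From Coquelicot Require Import Coquelicot.
Open Scope R_scope.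

Notation D := Defs.dist.

Lemma gam_shift a t t' x : a <> 0 -> gam a t = gam a t' -> gam a (t+x) = gam a (t'+x).
Proof.
  intros Ha H. unfold gam in *. injection H as H1 H2.
  assert (Hc : cos t = cos t').
  { apply (Rmult_eq_reg_l a); auto. }
  assert (Hs : sin t = sin t') by lra.
  rewrite !cos_plus, !sin_plus, Hc, Hs. reflexivity.
Qed.

Lemma gam_per a x : gam a (x + 2*PI) = gam a x.
Proof.
  unfold gam. rewrite cos_plus, sin_plus, cos_2PI, sin_2PI. f_equal; ring.
Qed.

Lemma gam_uniq a t s s' : a <> 0 -> 0 <= s < 2*PI -> 0 <= s' < 2*PI ->
  gam a (t+s) = gam a (t+s') -> s = s'.
Proof.
  intros Ha Hs Hs' H. unfold gam in H. injection H as H1 H2.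
  assert (Hc : cos (t+s) = cos (t+s')).
  { apply (Rmult_eq_reg_l a); auto. }
  assert (Hsn : sin (t+s) = sin (t+s')) by lra.
  assert (Hd : forall d, 0 < d < 2*PI -> cos d = 1 -> False).
  { intros d Hd Hcd. rewrite <- (Rmult_1_l d) in Hcd.
    replace (1*d) with (2*(d/2)) in Hcd by field.
    rewrite cos_2a_sin in Hcd.
    assert (0 < sin (d/2)) by (apply sin_gt_0; lra). nra. }
  assert (Hcos : cos ((t+s) - (t+s')) = 1).
  { rewrite cos_minus, Hc, Hsn. pose proof (sin2_cos2 (t+s')). unfold Rsqr in *. lra. }
  replace ((t+s) - (t+s')) with (s - s') in Hcos by ring.
  destruct (Rtotal_order s s') as [Hl|[He|Hg]]; auto.
  - exfalso. apply (Hd (s'-s)). lra. rewrite <- cos_neg. replace (-(s'-s)) with (s-s') by ring. auto.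
  - exfalso. apply (Hd (s-s')). lra. auto.
Qed.

Lemma gam_onY a t : a <> 0 -> onY a (gam a t).
Proof.
  intros Ha. unfold onY, gam; simpl. field_simplify; auto.
  pose proof (sin2_cos2 t). unfold Rsqr in H. nra.
Qed.
Lemma gam_rel a t q : 0 < a -> onY a q -> exists s, 0 <= s < 2*PI /\ q = gam a (t+s).
Proof.
  intros Ha Hq. destruct q as [x y]. unfold onY in Hq; simpl in Hq.
  set (x' := x/a) in *. set (y' := -y).
  set (A := x' * cos t + y' * sin t). set (B := y' * cos t - x' * sin t).
  pose proof (sin2_cos2 t) as Ht. unfold Rsqr in Ht.
  assert (HAB : A*A + B*B = 1).
  { unfold A, B, y'. nra. }
  assert (HA : -1 <= A <= 1) by nra.
  set (s0 := acos A).
  assert (Hc0 : cos s0 = A) by (apply cos_acos; auto).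
  assert (Hs0 : sin s0 = Rabs B).
  { unfold s0. rewrite sin_acos; auto. rewrite <- sqrt_Rsqr_abs. f_equal. unfold Rsqr. lra. }
  pose proof (acos_bound A) as Hb. fold s0 in Hb.
  assert (Hgoal : forall s, cos s = A -> sin s = B -> (x, y) = gam a (t+s)).
  { intros s Hc Hs. unfold gam. rewrite cos_plus, sin_plus, Hc, Hs. unfold A, B, y'.
    f_equal.
    - replace (cos t * (x' * cos t + - y * sin t) - sin t * (- y * cos t - x' * sin t)) with (x' * (sin t * sin t + cos t * cos t)) by ring.
      rewrite Ht. unfold x'. field. lra.
    - replace (- (sin t * (x' * cos t + - y * sin t) + cos t * (- y * cos t - x' * sin t))) with (y * (sin t * sin t + cos t * cos t)) by ring.
      rewrite Ht. ring. }
  destruct (Rle_or_lt 0 B) as [HB|HB].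
  - exists s0. split. pose proof PI_RGT_0. lra. apply Hgoal; auto. rewrite Hs0. apply Rabs_right; lra.
  - exists (2*PI - s0).
    assert (s0 <> 0).
    { intro E. rewrite E, sin_0 in Hs0. pose proof (Rabs_pos_lt B). lra. }
    split. lra. apply Hgoal.
    + rewrite cos_minus, cos_2PI, sin_2PI. lra.
    + rewrite sin_minus, cos_2PI, sin_2PI, Hs0, Rabs_left; lra.
Qed.
Definition Phi a t h := sin h ^ 2 * (1 + (a^2 - 1) * sin (t+h) ^ 2).
Definition Phi' a t h := 2*sin h*cos h*(1 + (a^2-1)*sin(t+h)^2)
   + sin h^2 * ((a^2-1) * (2*sin(t+h)*cos(t+h))).

Lemma D_fwd a t s : D (gam a t) (gam a (t+s)) = sqrt (4 * Phi a t (s/2)).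
Proof.
  unfold D, gam, Phi; simpl fst; simpl snd. f_equal.
  set (h := s/2). set (m := t + s/2).
  assert (Hc : cos t - cos (t+s) = 2 * sin h * sin m).
  { rewrite form2. replace ((t - (t+s))/2) with (- h) by (unfold h; field).
    replace ((t + (t+s))/2) with m by (unfold m; field). rewrite sin_neg. ring. }
  assert (Hs : sin t - sin (t+s) = -2 * cos m * sin h).
  { rewrite form4. replace ((t - (t+s))/2) with (- h) by (unfold h; field).
    replace ((t + (t+s))/2) with m by (unfold m; field). rewrite sin_neg. ring. }
  replace ((a * cos t - a * cos (t + s)) ^ 2 + (- sin t - - sin (t + s)) ^ 2)
    with (a^2*(cos t - cos(t+s))^2 + (sin t - sin(t+s))^2) by ring.
  rewrite Hc, Hs. replace (t + h) with m by (unfold m, h; ring).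
  pose proof (sin2_cos2 m) as Hm. unfold Rsqr in Hm. nra.
Qed.

Lemma D_sym p q : D p q = D q p.
Proof. unfold D. f_equal. ring. Qed.

Lemma D_bwd a T s : D (gam a T) (gam a (T - s)) = sqrt (4 * Phi a (-T) (s/2)).
Proof.
  rewrite <- D_fwd. unfold D, gam; simpl fst; simpl snd.
  replace (-T + s) with (-(T - s)) by ring. rewrite !cos_neg, !sin_neg. f_equal. ring.
Qed.

Lemma Phi_der a t h : derivable_pt_lim (Phi a t) h (Phi' a t h).
Proof.
  apply is_derive_Reals. unfold Phi, Phi'. auto_derive; auto. ring.
Qed.

Lemma Phi2_cont a t : continuity (fun s => Phi a t (s/2)).
Proof.
  intro x. apply derivable_continuous_pt.
  exists (Phi' a t (x/2) * / 2).
  apply is_derive_Reals. unfold Phi, Phi'. auto_derive; auto. unfold Rdiv. ring.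
Qed.

Lemma Phi_cont a t x : continuity_pt (Phi a t) x.
Proof.
  apply derivable_continuous_pt. exists (Phi' a t x). apply Phi_der.
Qed.
Lemma Phi'_pos a t h : 1 < a -> a^2 <= 2 -> 0 < h < PI/2 -> Phi a t h < 1 -> 0 < Phi' a t h.
Proof.
  intros Ha Ha2 Hh HP. unfold Phi, Phi' in *.
  assert (Hsh : 0 < sin h) by (apply sin_gt_0; lra).
  assert (Hch : 0 < cos h) by (apply cos_gt_0; lra).
  set (c := a^2 - 1) in *. assert (Hc : 0 < c <= 1) by (unfold c; nra).
  set (S := sin (t+h)) in *. set (C := cos (t+h)).
  pose proof (sin2_cos2 h) as H1. pose proof (sin2_cos2 (t+h)) as H2. unfold Rsqr in *. fold S C in H2.
  set (sh := sin h) in *. set (ch := cos h) in *.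
  assert (K : 0 < ch*(1+c*S^2) + c*sh*S*C).
  { destruct (Rle_or_lt 0 (S*C)) as [HSC|HSC].
    - assert (0 <= c*sh*(S*C)) by (apply Rmult_le_pos; nra).
      assert (0 <= c*S^2) by (apply Rmult_le_pos; nra).
      assert (0 <= ch*(c*S^2)) by (apply Rmult_le_pos; nra).
      replace (ch*(1+c*S^2) + c*sh*S*C) with (ch + ch*(c*S^2) + c*sh*(S*C)) by ring. lra.
    - set (P := ch*(1+c*S^2)). set (Q := c*sh*(-(S*C))).
      assert (0 <= c*S^2) by (apply Rmult_le_pos; nra).
      assert (HPp : 0 < P) by (unfold P; apply Rmult_lt_0_compat; lra).
      assert (HQp : 0 < Q) by (unfold Q; apply Rmult_lt_0_compat; nra).
      assert (E1 : ch*ch*(1+c*S^2) > c*S^2) by nra.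
      assert (E2 : P*P > c*S^2*(1+c*S^2)).
      { unfold P. replace (ch * (1 + c * S ^ 2) * (ch * (1 + c * S ^ 2))) with ((ch*ch*(1+c*S^2))*(1+c*S^2)) by ring.
        apply Rmult_gt_compat_r; nra. }
      assert (E3 : c*S^2*(1+c*S^2) >= c*S^2) by nra.
      assert (E4 : Q*Q <= c*S^2).
      { unfold Q. replace (c * sh * - (S * C) * (c * sh * - (S * C))) with ((c*S^2)*(c*(sh*sh)*(C*C))) by ring.
        assert (0 <= c*(sh*sh)*(C*C) <= 1).
        { split. apply Rmult_le_pos; nra.
          assert (sh*sh <= 1) by nra. assert (C*C <= 1) by nra.
          assert (c*(sh*sh) <= 1) by nra. nra. }
        assert (0 <= c*S^2) by nra. nra. }
      assert (Q < P) by nra. unfold P, Q in *. nra. }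
  nra.
Qed.

Lemma local_dec f x l lo : derivable_pt_lim f x l -> 0 < l -> lo < x ->
  exists y, lo < y < x /\ f y < f x.
Proof.
  intros Hd Hl Hlo. destruct (Hd l Hl) as [del Hdel].
  set (k := Rmin (del/2) ((x - lo)/2)).
  assert (Hk : 0 < k). { unfold k. apply Rmin_pos. pose proof (cond_pos del). lra. lra. }
  assert (Hk1 : k <= del/2) by apply Rmin_l.
  assert (Hk2 : k <= (x-lo)/2) by apply Rmin_r.
  specialize (Hdel (-k)). assert (-k <> 0) by lra.
  assert (Rabs (-k) < del). { rewrite Rabs_left by lra. pose proof (cond_pos del). lra. }
  specialize (Hdel H H0).
  exists (x + -k). split. lra.
  apply Rabs_def2 in Hdel. destruct Hdel as [_ Hdel].
  assert (0 < (f (x + - k) - f x) / - k) by lra.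
  assert (0 < (f x - f (x + - k)) / k).
  { replace ((f x - f (x + - k)) / k) with ((f (x + - k) - f x) / - k) by (field; lra). auto. }
  apply Rmult_lt_compat_r with (r := k) in H2; auto.
  replace ((f x - f (x + - k)) / k * k) with (f x - f (x + - k)) in H2 by (field; lra). lra.
Qed.

Lemma ML a t h1 h2 : 1 < a -> a^2 <= 2 -> 0 <= h1 < h2 -> h2 <= PI/2 ->
  (Phi a t h1 < 1 \/ Phi a t h2 < 1) -> Phi a t h1 < Phi a t h2.
Proof.
  intros Ha Ha2 Hh Hh2 Hor.
  destruct (Rlt_or_le (Phi a t h1) (Phi a t h2)) as [|Hle]; auto. exfalso.
  assert (H2 : Phi a t h2 < 1) by (destruct Hor; lra).
  destruct (continuity_ab_min (Phi a t) h1 h2) as [M [HM HMb]]. lra.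
  { intros; apply Phi_cont. }
  assert (Hx : exists x, h1 < x <= h2 /\ (forall c, h1 <= c <= h2 -> Phi a t x <= Phi a t c)).
  { destruct (Req_dec M h1) as [E|E].
    - exists h2. split. lra. intros c Hc. subst M. specialize (HM c Hc). lra.
    - exists M. split. lra. auto. }
  destruct Hx as [x [Hxb Hxm]].
  assert (Hx1 : Phi a t x < 1). { specialize (Hxm h2). lra. }
  assert (Hxpi : x < PI/2).
  { destruct (Rle_lt_or_eq_dec x (PI/2)) as [|E]. lra. auto. exfalso.
    rewrite E in Hx1. unfold Phi in Hx1. rewrite sin_PI2 in Hx1.
    assert (0 <= (a^2-1)*sin (t+PI/2)^2). { apply Rmult_le_pos. nra. apply pow2_ge_0. }
    lra. }
  assert (Hd : 0 < Phi' a t x) by (apply Phi'_pos; auto; lra).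
  destruct (local_dec _ _ _ h1 (Phi_der a t x) Hd) as [y [Hy Hy2]]. lra.
  specialize (Hxm y). lra.
Qed.
Lemma sq_lt x y : 0 <= x -> sqrt x < sqrt y -> x < y.
Proof. intros; apply sqrt_lt_0_alt; auto. Qed.
Lemma sq_lt' x y : 0 <= x -> x < y -> sqrt x < sqrt y.
Proof. intros; apply sqrt_lt_1_alt; lra. Qed.
Lemma sq_le x y : 0 <= x -> 0 <= y -> sqrt x <= sqrt y -> x <= y.
Proof. intros; apply sqrt_le_0; auto. Qed.
Lemma rsq r : 0 <= r -> r = sqrt (r*r).
Proof. intros; rewrite sqrt_square; auto. Qed.

Lemma Phi_nonneg a t h : 1 <= a -> 0 <= Phi a t h.
Proof.
  intros Ha. unfold Phi. apply Rmult_le_pos. apply pow2_ge_0.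
  assert (0 <= (a^2-1)*sin (t+h)^2). { apply Rmult_le_pos. nra. apply pow2_ge_0. } lra.
Qed.

Lemma Phi_pi2 a t : 1 <= a -> 1 <= Phi a t (PI/2).
Proof.
  intros Ha. unfold Phi. rewrite sin_PI2.
  assert (0 <= (a^2-1)*sin (t+PI/2)^2). { apply Rmult_le_pos. nra. apply pow2_ge_0. } lra.
Qed.

Lemma Phi_0 a t : Phi a t 0 = 0.
Proof. unfold Phi. rewrite sin_0. ring. Qed.

Lemma hinv_spec a t : 1 < a ->
  onY a (hinv a (gam a t)) /\
  forall q', onY a q' -> D (gam a t) q' <= D (gam a t) (hinv a (gam a t)).
Proof.
  intros Ha. unfold hinv. apply epsilon_spec.
  destruct (continuity_ab_maj (fun s => Phi a t (s/2)) 0 (2*PI)) as [M [HM HMb]].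
  { pose proof PI_RGT_0; lra. }
  { intros; apply Phi2_cont. }
  exists (gam a (t+M)). split. apply gam_onY; lra.
  intros q' Hq'. destruct (gam_rel a t q') as [s [Hs E]]; try lra; auto. subst q'.
  rewrite !D_fwd. apply sqrt_le_1_alt. specialize (HM s). simpl in HM. lra.
Qed.

Lemma hinv_far a t : 1 < a -> 2 <= D (gam a t) (hinv a (gam a t)).
Proof.
  intros Ha. destruct (hinv_spec a t Ha) as [_ H].
  specialize (H (gam a (t+PI)) (gam_onY a _ ltac:(lra))).
  rewrite D_fwd in H. pose proof (Phi_pi2 a t). 
  assert (sqrt (2*2) <= sqrt (4 * Phi a t (PI/2))).
  { apply sqrt_le_1_alt. lra. }
  rewrite sqrt_square in H1 by lra.
  lra.
Qed.

Lemma arc_rebase a t p q x (P : R -> R -> Prop) : a <> 0 -> p = gam a t ->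
  (exists t1 s u, p = gam a t1 /\ x = gam a (t1+s) /\ q = gam a (t1+u) /\ P s u) ->
  exists s u, x = gam a (t+s) /\ q = gam a (t+u) /\ P s u.
Proof.
  intros Ha Hp [t1 [s [u [H1 [H2 [H3 H4]]]]]].
  exists s, u. rewrite Hp in H1. split; [|split]; auto.
  - rewrite H2. apply gam_shift; auto.
  - rewrite H3. apply gam_shift; auto.
Qed.

Lemma g_spec a r t : 1 < a -> a^2 <= 2 -> 0 < r < 2 ->
  exists sg, 0 < sg < PI /\ g a r (gam a t) = gam a (t+sg) /\ 4 * Phi a t (sg/2) = r*r.
Proof.
  intros Ha Ha2 Hr.
  assert (Ha0 : a <> 0) by lra.
  pose proof PI_RGT_0 as HPI.
  destruct (hinv_spec a t Ha) as [Hon _].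
  pose proof (hinv_far a t Ha) as Hfar.
  destruct (gam_rel a t _ ltac:(lra) Hon) as [ss [Hss Ess]].
  rewrite Ess in Hfar. rewrite D_fwd in Hfar.
  assert (Hfar' : 4 <= 4 * Phi a t (ss/2)).
  { apply sq_le. lra. pose proof (Phi_nonneg a t (ss/2)); lra.
    assert (E: sqrt 4 = 2) by (replace 4 with (2*2) by ring; apply sqrt_square; lra).
    rewrite E. auto. }
  assert (Hex : exists q, onY a q /\ arc_cc a (gam a t) (hinv a (gam a t)) q /\ D (gam a t) q = r).
  { assert (Hf : continuity (fun s => 4 * Phi a t (s/2) - r*r)).
    { intro x. apply continuity_pt_minus. apply continuity_pt_mult. apply continuity_pt_const. intros u v; auto.
      apply Phi2_cont. apply continuity_pt_const. intros u v; auto. }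
    assert (Hss0 : 0 < ss).
    { destruct (Rle_lt_or_eq_dec 0 ss) as [|E]; try lra. rewrite <- E in Hfar'.
      replace (0/2) with 0 in Hfar' by field. rewrite Phi_0 in Hfar'. lra. }
    destruct (IVT _ 0 ss Hf Hss0) as [z [Hz Hz2]].
    { simpl. replace (0/2) with 0 by field. rewrite Phi_0. nra. }
    { simpl. nra. }
    exists (gam a (t+z)). split. apply gam_onY; auto. split.
    - exists t, z, ss. rewrite Ess. repeat split; auto; lra.
    - rewrite D_fwd. rewrite (rsq r) by lra. f_equal. lra. }
  pose proof (epsilon_spec pt_inh _ Hex) as Hg. fold (g a r (gam a t)) in Hg.
  destruct Hg as [_ [Harc HD]].
  unfold arc_cc in Harc.
  destruct (arc_rebase a t _ _ _ (fun s u => 0 <= s /\ s <= u /\ u < 2*PI) Ha0 eq_refl Harc)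
    as [s [u [E1 [E2 [Hs1 [Hs2 Hs3]]]]]].
  rewrite Ess in E2. apply gam_uniq in E2; auto; try lra. subst u.
  rewrite E1, D_fwd in HD.
  assert (Hphi : 4 * Phi a t (s/2) = r*r).
  { rewrite <- HD. rewrite sqrt_sqrt; auto. pose proof (Phi_nonneg a t (s/2)); lra. }
  exists s. split; [|split]; auto.
  assert (Hs0 : 0 < s).
  { destruct (Rle_lt_or_eq_dec 0 s) as [|E]; try lra. rewrite <- E in Hphi.
    replace (0/2) with 0 in Hphi by field. rewrite Phi_0 in Hphi. nra. }
  split; auto.
  destruct (Rlt_or_le s PI) as [|Hge]; auto. exfalso.
  destruct (Rle_lt_or_eq_dec PI s Hge) as [Hgt|E].
  2:{ rewrite <- E in Hphi. pose proof (Phi_pi2 a t). nra. }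
  assert (Hlt : s < ss).
  { destruct (Rle_lt_or_eq_dec s ss Hs2) as [|E]; auto. subst. nra. }
  assert (B1 : forall x, gam a (t+x) = gam a ((t + 2*PI) - (2*PI - x))).
  { intro x. f_equal. ring. }
  assert (HP : gam a t = gam a (t + 2*PI)) by (rewrite gam_per; auto).
  pose proof (ML a (-(t+2*PI)) ((2*PI - ss)/2) ((2*PI - s)/2) Ha Ha2) as HML.
  assert (E3 : D (gam a t) (gam a (t+s)) = sqrt (4 * Phi a (-(t+2*PI)) ((2*PI - s)/2))).
  { rewrite HP at 1. rewrite (B1 s). apply D_bwd. }
  assert (E4 : D (gam a t) (gam a (t+ss)) = sqrt (4 * Phi a (-(t+2*PI)) ((2*PI - ss)/2))).
  { rewrite HP at 1. rewrite (B1 ss). apply D_bwd. }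
  rewrite !D_fwd in E3, E4.
  assert (Phi a t (s/2) = Phi a (-(t+2*PI)) ((2*PI - s)/2)).
  { apply Rmult_eq_reg_l with 4; [|lra]. apply sqrt_inj; auto.
    pose proof (Phi_nonneg a t (s/2)); lra. pose proof (Phi_nonneg a (-(t+2*PI)) ((2*PI - s)/2)); lra. }
  assert (Phi a t (ss/2) = Phi a (-(t+2*PI)) ((2*PI - ss)/2)).
  { apply Rmult_eq_reg_l with 4; [|lra]. apply sqrt_inj; auto.
    pose proof (Phi_nonneg a t (ss/2)); lra. pose proof (Phi_nonneg a (-(t+2*PI)) ((2*PI - ss)/2)); lra. }
  assert (Phi a (-(t+2*PI)) ((2*PI - ss)/2) < Phi a (-(t+2*PI)) ((2*PI - s)/2)).
  { apply HML. lra. lra. right. nra. }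
  nra.
Qed.
Lemma char_lt a r t sg s : 1 < a -> a^2 <= 2 -> 0 < r < 2 -> 0 < sg < PI ->
  4 * Phi a t (sg/2) = r*r -> 0 <= s <= PI -> (4 * Phi a t (s/2) < r*r <-> s < sg).
Proof.
  intros Ha Ha2 Hr Hsg Hp Hs. split.
  - intro H. destruct (Rlt_or_le s sg) as [|Hle]; auto. exfalso.
    destruct (Rle_lt_or_eq_dec sg s Hle) as [Hl|E].
    + assert (Phi a t (sg/2) < Phi a t (s/2)) by (apply ML; auto; try lra; left; nra). lra.
    + subst. lra.
  - intro H. assert (Phi a t (s/2) < Phi a t (sg/2)) by (apply ML; auto; try lra; right; nra). lra.
Qed.

Lemma Dlt a t s r : 1 <= a -> 0 < r ->
  (D (gam a t) (gam a (t+s)) < r <-> 4*Phi a t (s/2) < r*r).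
Proof.
  intros Ha Hr. rewrite D_fwd. pose proof (Phi_nonneg a t (s/2) Ha). split; intro H0.
  - apply sq_lt. lra. rewrite <- rsq; lra.
  - rewrite (rsq r) by lra. apply sq_lt'; lra.
Qed.

Lemma Dle a t s r : 1 <= a -> 0 < r ->
  (D (gam a t) (gam a (t+s)) <= r <-> 4*Phi a t (s/2) <= r*r).
Proof.
  intros Ha Hr. rewrite D_fwd. pose proof (Phi_nonneg a t (s/2) Ha). split; intro H0.
  - apply sq_le. lra. nra. rewrite <- rsq; lra.
  - rewrite (rsq r) by lra. apply sqrt_le_1_alt; lra.
Qed.

Lemma edge_oo a r v u : 1 < a -> a^2 <= 2 -> 0 < r < 2 -> arc_oo a v (g a r v) u ->
  exists t b sg, v = gam a t /\ u = gam a (t+b) /\ g a r v = gam a (t+sg) /\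
    0 < b < sg /\ sg < PI /\ 4 * Phi a t (sg/2) = r*r.
Proof.
  intros Ha Ha2 Hr [t [b [u0 [E1 [E2 [E3 [H1 [H2 H3]]]]]]]].
  destruct (g_spec a r t Ha Ha2 Hr) as [sg [Hsg [Eg Hp]]].
  rewrite <- E1 in Eg. rewrite Eg in E3. apply gam_uniq in E3; try lra.
  subst u0. exists t, b, sg. repeat split; auto; lra.
Qed.

Lemma edge_oc a r v u : 1 < a -> a^2 <= 2 -> 0 < r < 2 -> arc_oc a v (g a r v) u ->
  exists t b sg, v = gam a t /\ u = gam a (t+b) /\ g a r v = gam a (t+sg) /\
    0 < b <= sg /\ sg < PI /\ 4 * Phi a t (sg/2) = r*r.
Proof.
  intros Ha Ha2 Hr [t [b [u0 [E1 [E2 [E3 [H1 [H2 H3]]]]]]]].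
  destruct (g_spec a r t Ha Ha2 Hr) as [sg [Hsg [Eg Hp]]].
  rewrite <- E1 in Eg. rewrite Eg in E3. apply gam_uniq in E3; try lra.
  subst u0. exists t, b, sg. repeat split; auto; lra.
Qed.

Lemma gam_neq a t s : a <> 0 -> 0 < s < 2*PI -> gam a t <> gam a (t+s).
Proof.
  intros Ha Hs E. replace t with (t+0) in E at 1 by ring.
  apply gam_uniq in E; lra.
Qed.

Lemma shrink a t al b : 1 < a -> a^2 <= 2 -> 0 < al < b -> b <= PI ->
  D (gam a t) (gam a (t+b)) < 2 ->
  D (gam a (t+al)) (gam a (t+b)) < D (gam a t) (gam a (t+b)).
Proof.
  intros Ha Ha2 Hab Hb HD.
  rewrite (D_sym (gam a (t+al))), (D_sym (gam a t)) in *.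
  replace (gam a (t+al)) with (gam a ((t+b) - (b-al))) by (f_equal; ring).
  replace (gam a t) with (gam a ((t+b) - b)) in * by (f_equal; ring).
  rewrite !D_bwd in *.
  pose proof (Phi_nonneg a (-(t+b)) (b/2) ltac:(lra)).
  pose proof (Phi_nonneg a (-(t+b)) ((b-al)/2) ltac:(lra)).
  assert (4 * Phi a (-(t+b)) (b/2) < 4).
  { apply sq_lt. lra. assert (E: sqrt 4 = 2) by (replace 4 with (2*2) by ring; apply sqrt_square; lra).
    rewrite E. auto. }
  apply sq_lt'. lra.
  assert (Phi a (-(t+b)) ((b-al)/2) < Phi a (-(t+b)) (b/2)).
  { apply ML; auto; lra. }
  lra.
Qed.
Theorem mainTheorem19 (a r : R) (X : pt -> Prop)
  (ha : 1 < a <= sqrt 2) (hX : forall p, X p -> onY a p) (hr : 0 < r < 2) :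
  cyclic_graph a X (VR_lt_dir a X r) /\ cyclic_graph a X (VR_le_dir a X r).
Proof.
  destruct ha as [Ha Has].
  assert (Ha2 : a^2 <= 2).
  { pose proof (sqrt_sqrt 2 ltac:(lra)). pose proof (sqrt_pos 2). nra. }
  assert (Ha0 : a <> 0) by lra.
  pose proof PI_RGT_0 as HPI.
  split; unfold cyclic_graph; split; [| split | | split].
  - intros v _ [_ [_ [Hne _]]]. apply Hne; auto.
  - intros u v Hu Hv [_ [_ [_ [_ A1]]]] [_ [_ [_ [_ A2]]]].
    destruct (edge_oo a r v u Ha Ha2 hr A1) as [t [b [sg [Ev [Eu [_ [Hb [Hsg _]]]]]]]].
    destruct (edge_oo a r u v Ha Ha2 hr A2) as [t2 [b2 [sg2 [Eu2 [Ev2 [_ [Hb2 [Hsg2 _]]]]]]]].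
    rewrite Eu in Eu2. apply (gam_shift a _ _ b2 Ha0) in Eu2.
    rewrite Ev2, <- Eu2, Rplus_assoc in Ev. symmetry in Ev. revert Ev. apply gam_neq; auto. lra.
  - intros v u w Hv Hu Hw [_ [_ [Hne [Hd Arc]]]] Hcyc.
    destruct (edge_oo a r v u Ha Ha2 hr Arc) as [t [b [sg [Ev [Eu [Eg [Hb [Hsg Hp]]]]]]]].
    subst v u. unfold cyc, arc_oo in Hcyc.
    destruct (arc_rebase a t _ _ _ (fun s u => 0 < s /\ s < u /\ u < 2*PI) Ha0 eq_refl Hcyc)
      as [al [b' [Ew [Eu' [H1 [H2 H3]]]]]].
    apply gam_uniq in Eu'; try lra. subst b' w.
    destruct (g_spec a r (t+al) Ha Ha2 hr) as [sw [Hsw [Egw Hpw]]].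
    split.
    + split; [|split; [|split; [|split]]]; auto.
      * apply gam_neq; auto; lra.
      * apply Dlt; try lra. apply (char_lt a r t sg); auto; lra.
      * exists t, al, sg. repeat split; auto; lra.
    + assert (Ew : gam a (t+b) = gam a ((t+al) + (b-al))) by (f_equal; ring).
      assert (Hdw : D (gam a (t+al)) (gam a (t+b)) < r).
      { pose proof (shrink a t al b Ha Ha2 ltac:(lra) ltac:(lra) ltac:(lra)). lra. }
      split; [|split; [|split; [|split]]]; auto.
      * rewrite Ew. apply gam_neq; auto; lra.
      * exists (t+al), (b-al), sw. rewrite Ew in *. repeat split; auto; try lra.
        apply (char_lt a r (t+al) sw); auto; try lra. apply Dlt; auto; lra.
  - intros v _ [_ [_ [Hne _]]]. apply Hne; auto.
  - intros u v Hu Hv [_ [_ [_ [_ A1]]]] [_ [_ [_ [_ A2]]]].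
    destruct (edge_oc a r v u Ha Ha2 hr A1) as [t [b [sg [Ev [Eu [_ [Hb [Hsg _]]]]]]]].
    destruct (edge_oc a r u v Ha Ha2 hr A2) as [t2 [b2 [sg2 [Eu2 [Ev2 [_ [Hb2 [Hsg2 _]]]]]]]].
    rewrite Eu in Eu2. apply (gam_shift a _ _ b2 Ha0) in Eu2.
    rewrite Ev2, <- Eu2, Rplus_assoc in Ev. symmetry in Ev. revert Ev. apply gam_neq; auto. lra.
  - intros v u w Hv Hu Hw [_ [_ [Hne [Hd Arc]]]] Hcyc.
    destruct (edge_oc a r v u Ha Ha2 hr Arc) as [t [b [sg [Ev [Eu [Eg [Hb [Hsg Hp]]]]]]]].
    subst v u. unfold cyc, arc_oo in Hcyc.
    destruct (arc_rebase a t _ _ _ (fun s u => 0 < s /\ s < u /\ u < 2*PI) Ha0 eq_refl Hcyc)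
      as [al [b' [Ew [Eu' [H1 [H2 H3]]]]]].
    apply gam_uniq in Eu'; try lra. subst b' w.
    destruct (g_spec a r (t+al) Ha Ha2 hr) as [sw [Hsw [Egw Hpw]]].
    split.
    + split; [|split; [|split; [|split]]]; auto.
      * apply gam_neq; auto; lra.
      * apply Rlt_le. apply Dlt; try lra. apply (char_lt a r t sg); auto; lra.
      * exists t, al, sg. repeat split; auto; lra.
    + assert (Ew : gam a (t+b) = gam a ((t+al) + (b-al))) by (f_equal; ring).
      assert (Hdw : D (gam a (t+al)) (gam a (t+b)) < r).
      { pose proof (shrink a t al b Ha Ha2 ltac:(lra) ltac:(lra) ltac:(lra)). lra. }
      split; [|split; [|split; [|split]]]; auto.
      * rewrite Ew. apply gam_neq; auto; lra.
      * lra.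
      * exists (t+al), (b-al), sw. rewrite Ew in *. repeat split; auto; try lra.
        apply Rlt_le. apply (char_lt a r (t+al) sw); auto; try lra. apply Dlt; auto; lra.
Qed.
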